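(* Let $\mathcal{G}=(G,(m,r))$ be an undirected, mutant-biased fitness graph on $n=|V|$ nodes, and let $S\subseteq V$ be a seed set. Let $T(\mathcal{G},S)$ denote the expected number of steps of the Heterogeneous Moran process started from $\mathcal{X}_0=S$ until it reaches one of the absorbing configurations $\emptyset$ or $V$. Then \[ T(\mathcal{G},S)\le \left(n^2\cdot\frac{m_{\max}}{r_{\min}}\right)^3, \] where $m_{\max}=\max_{u\in V} m(u)$ and $r_{\min}=\min_{u\in V} r(u)$.
   Context: A fitness graph is $\mathcal{G}=(G,(m,r))$ where $G=(V,E,w)$ is a strongly connected directed graph, $w(u,\cdot)$ is a probability distribution over the out-neighbours of $u$ (positive on edges), and $r,m\colon V\to(0,\infty)$ are the resident and mutant fitness functions. $G$ is undirected if $E$ is symmetric and $w(u,v)=1/d(u)$ for every edge $(u,v)$, where $d(u)$ is the degree of $u$. $\mathcal{G}$ is mutant-biased if $m(u)\ge r(u)$ for all $u\in V$. A configuration is a set $X\subseteq V$ (the mutants); the fitness of $u$ in $X$ is $f_X(u)=m(u)$ if $u\in X$ and $f_X(u)=r(u)$ otherwise. The Heterogeneous Moran process is the Markov chain $\mathcal{X}_0=S,\mathcal{X}_1,\dots$ where, from $\mathcal{X}_t=X$, a node $u$ is chosen with probability $f_X(u)/\sum_{v\in V}f_X(v)$, then a node $v$ is chosen with probability $w(u,v)$, and $v$ takes the type of $u$ (so $\mathcal{X}_{t+1}=X\cup\{v\}$ if $u\in X$ and $\mathcal{X}_{t+1}=X\setminus\{v\}$ otherwise). The configurations $\emptyset$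 and $V$ are absorbing. *)

(* Defs.v *)
From HB Require Import structures.
From mathcomp Require Import all_boot all_order all_algebra.
From mathcomp Require Import all_classical all_reals all_analysis.
Set Implicit Arguments. Unset Strict Implicit. Unset Printing Implicit Defensive.
Import Order.TTheory GRing.Theory Num.Theory.
Local Open Scope ring_scope.

Section Moran.
Variables (R : realType) (V : finType).

Definition undirected_graph (e : rel V) : Prop :=
  symmetric e /\ irreflexive e.

Definition strongly_connected (e : rel V) : Prop :=
  forall u v : V, connect e u v.

Definition deg (e : rel V) (u : V) : nat := #|[set v | e u v]|.

Definition weight (e : rel V) (u v : V) : R :=
  if e u v then (deg e u)%:R^-1 else 0.

Definition mutant_biased (m r : V -> R) : Prop := forall u, r u <= m u.

Definition fitness (m r : V -> R) (X : {set V}) (u : V) : R :=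
  if u \in X then m u else r u.

Definition total_fitness (m r : V -> R) (X : {set V}) : R :=
  \sum_(v : V) fitness m r X v.

Definition moran_step (e : rel V) (m r : V -> R) (X Y : {set V}) : R :=
  \sum_(u : V) \sum_(v : V)
     (fitness m r X u / total_fitness m r X) * weight e u v *
     (if Y == (if u \in X then X :|: [set v] else X :\ v) then 1 else 0).

Fixpoint moran_dist (e : rel V) (m r : V -> R) (S : {set V}) (t : nat)
  : {set V} -> R :=
  match t with
  | 0 => fun Y => if Y == S then 1 else 0
  | t'.+1 => fun Y => \sum_(X : {set V}) moran_dist e m r S t' X * moran_step e m r X Y
  end.

(* P(tau > t) = P(X_t is not absorbing), as the absorbing states are closed. *)
Definition not_absorbed_prob (e : rel V) (m r : V -> R) (S : {set V}) (t : nat) : R :=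
  \sum_(X : {set V} | (X != finset.set0) && (X != [set: V])) moran_dist e m r S t X.

(* Expected absorption time T(G,S) = E[tau] = sum_{t>=0} P(tau > t), in \bar R. *)
Definition expected_absorption_time (e : rel V) (m r : V -> R) (S : {set V})
  : \bar R :=
  (\sum_(0 <= t <oo) (not_absorbed_prob e m r S t)%:E)%E.

Definition m_max (m : V -> R) : R :=
  match [pick u : V] with Some u0 => \big[Num.max/m u0]_(u : V) m u | None => 0 end.
Definition r_min (r : V -> R) : R :=
  match [pick u : V] with Some u0 => \big[Num.min/r u0]_(u : V) r u | None => 0 end.

End Moran.

(* Main.v *)
Require Import Defs.
From HB Require Import structures.
From mathcomp Require Import all_boot all_order all_algebra.
From mathcomp Require Import all_classical all_reals all_analysis.
From mathcomp Require Import ring lra.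
Import Order.TTheory GRing.Theory Num.Theory.
Local Open Scope ring_scope.

Section MoranProof.
Variables (R : realType) (V : finType) (e : rel V) (m r : V -> R).
Hypothesis He : undirected_graph e.
Hypothesis Hconn : strongly_connected e.
Hypothesis Hm : forall u, 0 < m u.
Hypothesis Hr : forall u, 0 < r u.
Hypothesis Hbias : mutant_biased m r.

Lemma le_div (x x' y y' : R) : 0 <= x -> x <= x' -> 0 < y' -> y' <= y -> x / y <= x' / y'.
Proof.
move=> x0 xx y0 yy; apply: ler_pM => //.
  by rewrite invr_ge0; exact: le_trans (ltW y0) yy.
by rewrite lef_pV2 // posrE //; exact: lt_le_trans yy.
Qed.

Lemma le_mmax u : m u <= m_max m.
Proof.
rewrite /m_max; case: pickP => [u0 _|/(_ u) //].
by rewrite (bigD1 u) //= le_max lexx.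
Qed.

Lemma rmin_le u : r_min r <= r u.
Proof.
rewrite /r_min; case: pickP => [u0 _|/(_ u) //].
by rewrite (bigD1 u) //= ge_min lexx.
Qed.

Lemma rmin_gt0 (u : V) : 0 < r_min r.
Proof.
rewrite /r_min; case: pickP => [u0 _|/(_ u) //].
apply: (big_ind (fun x => 0 < x)) => // x y hx hy.
by rewrite lt_min hx hy.
Qed.

Lemma mmax_ge0 : 0 <= m_max m.
Proof.
have [u0 _|V0] := pickP (xpredT : pred V).
  exact: le_trans (ltW (Hm u0)) (le_mmax u0).
by rewrite /m_max; case: pickP => [u|//]; have := V0 u.
Qed.

Lemma rmin_ge0 : 0 <= r_min r.
Proof.
have [u0 _|V0] := pickP (xpredT : pred V).
  exact: ltW (rmin_gt0 u0).
by rewrite /r_min; case: pickP => [u|//]; have := V0 u.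
Qed.

Lemma fit_pos X u : 0 < fitness m r X u.
Proof. by rewrite /fitness; case: ifP. Qed.

Lemma fit_le X u : fitness m r X u <= m_max m.
Proof.
rewrite /fitness; case: ifP => _; first exact: le_mmax.
exact: le_trans (Hbias u) (le_mmax u).
Qed.

Lemma fit_ge X u : r_min r <= fitness m r X u.
Proof.
rewrite /fitness; case: ifP => _; last exact: rmin_le.
exact: le_trans (rmin_le u) (Hbias u).
Qed.

Lemma F_ge0 X : 0 <= total_fitness m r X.
Proof. by apply: sumr_ge0 => i _; exact: ltW (fit_pos _ _). Qed.

Lemma F_pos X (u : V) : 0 < total_fitness m r X.
Proof.
rewrite /total_fitness (bigD1 u) //=; apply: (lt_le_trans (fit_pos X u)).
by rewrite lerDl; apply: sumr_ge0 => i _; exact: ltW (fit_pos _ _).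
Qed.

Lemma F_le X : total_fitness m r X <= #|V|%:R * m_max m.
Proof.
rewrite /total_fitness.
apply: le_trans (ler_sum _ (fun i _ => fit_le X i)) _.
by rewrite sumr_const mulr_natl.
Qed.

Lemma esym u v : e u v = e v u.
Proof. by case: He => /(_ u v). Qed.

Lemma boundary (X : {set V}) : X != finset.set0 -> X != [set: V] ->
  exists u v, [/\ u \in X, v \notin X & e u v].
Proof.
move=> /set0Pn [x xX] XT.
have [y yX] : exists y, y \notin X.
  case: (pickP (fun y => y \notin X)) => [y yX|H]; first by exists y.
  exfalso; move/eqP: XT; apply; apply/setP => y; rewrite inE.
  by have := H y => /= /negbFE.
have /connectP [p pth ylast] := Hconn x y.
rewrite ylast in yX; clear ylast.
elim: p x xX pth yX => [|z p IH] x xX /=.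
  by move=> _; rewrite xX.
move=> /andP [exz pth] yX.
case: (boolP (z \in X)) => zX; first exact: IH zX pth yX.
by exists x, z.
Qed.

Lemma deg_pos u : (1 < #|V|)%N -> (0 < deg e u)%N.
Proof.
move=> /card_gt1P [x [y [_ _ xy]]].
have [w wu] : exists w, w != u.
  case: (eqVneq x u) => [xu|]; last by exists x.
  by exists y; rewrite -xu eq_sym.
have /connectP [[|z p] pth wl] := Hconn u w.
  by rewrite wl eqxx in wu.
move: pth => /= /andP [euz _].
rewrite /deg card_gt0; apply/set0Pn; exists z; by rewrite inE.
Qed.

Lemma deg_le u : (deg e u <= #|V|)%N.
Proof. exact: max_card. Qed.


Definition aa (x : V) : R := r x / (deg e x)%:R.
Definition phi (X : {set V}) : R := \sum_x (x \in X)%:R * aa x.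
Definition nxt (X : {set V}) u v := if u \in X then X :|: [set v] else X :\ v.
Definition cc (X : {set V}) u v : R :=
  fitness m r X u / total_fitness m r X * weight R e u v.
Definition Ex (X : {set V}) (g : V -> V -> R) : R :=
  \sum_u \sum_v cc X u v * g u v.

Lemma cc_ge0 X u v : 0 <= cc X u v.
Proof.
rewrite /cc /weight; apply: mulr_ge0; last by case: ifP => // _; rewrite invr_ge0.
by apply: divr_ge0; [exact: ltW (fit_pos _ _)| exact: F_ge0].
Qed.

Lemma step_exp X (g : {set V} -> R) :
  \sum_Y moran_step e m r X Y * g Y = Ex X (fun u v => g (nxt X u v)).
Proof.
rewrite /moran_step /Ex /nxt.
transitivity (\sum_Y \sum_u \sum_v cc X u v *
   ((if Y == (if u \in X then X :|: [set v] else X :\ v) then 1 else 0) * g Y)).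
  apply: eq_bigr => Y _; rewrite mulr_suml; apply: eq_bigr => u _.
  by rewrite mulr_suml; apply: eq_bigr => v _; rewrite /cc mulrA.
rewrite exchange_big; apply: eq_bigr => u _; rewrite exchange_big.
apply: eq_bigr => v _; rewrite -mulr_sumr; congr (_ * _).
rewrite (bigD1 (if u \in X then X :|: [set v] else X :\ v)) //= eqxx mul1r.
by rewrite big1 ?addr0 // => Y /negbTE ->; rewrite mul0r.
Qed.

Lemma eq_Ex X g h : (forall u v, g u v = h u v) -> Ex X g = Ex X h.
Proof.
by move=> gh; apply: eq_bigr => u _; apply: eq_bigr => v _; rewrite gh.
Qed.

Lemma ExD X g h : Ex X (fun u v => g u v + h u v) = Ex X g + Ex X h.
Proof.
rewrite /Ex -big_split; apply: eq_bigr => u _.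
by rewrite -big_split; apply: eq_bigr => v _; rewrite mulrDr.
Qed.

Lemma ExZ X k g : Ex X (fun u v => k * g u v) = k * Ex X g.
Proof.
rewrite /Ex mulr_sumr; apply: eq_bigr => u _.
by rewrite mulr_sumr; apply: eq_bigr => v _; rewrite mulrCA.
Qed.

Lemma Ex_ge0 X g : (forall u v, 0 <= g u v) -> 0 <= Ex X g.
Proof.
move=> g0; apply: sumr_ge0 => u _; apply: sumr_ge0 => v _.
by apply: mulr_ge0; [exact: cc_ge0 | exact: g0].
Qed.

Hypothesis Hn : (1 < #|V|)%N.

Lemma wsum u : \sum_v weight R e u v = 1.
Proof.
rewrite /weight -big_mkcond /= sumr_const.
have := deg_pos u Hn; rewrite /deg cardsE => dpos.
by rewrite -(mulr_natr ((#|e u|%:R)^-1)) mulVf // pnatr_eq0 -lt0n.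
Qed.

Lemma Ex1 X k : Ex X (fun _ _ => k) = k.
Proof.
have [u0 _] : exists u0 : V, true.
  by move/card_gt1P: Hn => [x [_ _]]; exists x.
rewrite /Ex /cc.
under eq_bigr => u _ do rewrite -mulr_suml -mulr_sumr wsum mulr1.
rewrite -mulr_suml -mulr_suml /total_fitness mulfV ?mul1r //.
by rewrite gt_eqF // -/(total_fitness m r X) (F_pos X u0).
Qed.


Lemma phi_nxt X u v : phi (nxt X u v) = phi X +
  (if u \in X then (v \notin X)%:R * aa v else - ((v \in X)%:R * aa v)).
Proof.
rewrite /nxt /phi; case: ifP => uX.
  rewrite (bigD1 v) //= [in RHS](bigD1 v) //=.
  rewrite (eq_bigr (fun x => (x \in X)%:R * aa x)); last first.
    by move=> x /negbTE xv; rewrite !inE xv orbF.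
  by rewrite !inE eqxx orbT; case: (v \in X) => /=; ring.
rewrite (bigD1 v) //= [in RHS](bigD1 v) //=.
rewrite (eq_bigr (fun x => (x \in X)%:R * aa x)); last first.
  by move=> x xv; rewrite !inE xv.
by rewrite !inE eqxx /=; case: (v \in X) => /=; ring.
Qed.

Lemma Delta X u v : phi (nxt X u v) - phi X =
  (if u \in X then (v \notin X)%:R * aa v else - ((v \in X)%:R * aa v)).
Proof. by rewrite phi_nxt addrC addKr. Qed.

Lemma aa_ge0 x : 0 <= aa x.
Proof. by rewrite /aa divr_ge0 // ltW. Qed.

Lemma pair_ge0 X u v :
  0 <= cc X u v * (phi (nxt X u v) - phi X) + cc X v u * (phi (nxt X v u) - phi X).
Proof.
rewrite !Delta /cc /weight (esym v u).
case: (e u v); last by rewrite !mulr0 !mul0r addr0.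
rewrite /fitness /aa.
case: (boolP (u \in X)) => uX; case: (boolP (v \in X)) => vX /=;
  rewrite ?mul0r ?mulr0 ?oppr0 ?addr0 ?lexx //.
- set F := total_fitness m r X.
  have -> : m u / F * (deg e u)%:R^-1 * (1 * (r v / (deg e v)%:R)) +
      r v / F * (deg e v)%:R^-1 * - (1 * (r u / (deg e u)%:R)) =
      (m u - r u) * r v * F^-1 * (deg e u)%:R^-1 * (deg e v)%:R^-1 by ring.
  rewrite !mulr_ge0 // ?invr_ge0 ?F_ge0 ?subr_ge0 ?Hbias // ltW //.
- set F := total_fitness m r X.
  have -> : r u / F * (deg e u)%:R^-1 * - (1 * (r v / (deg e v)%:R)) +
      m v / F * (deg e v)%:R^-1 * (1 * (r u / (deg e u)%:R)) =
      (m v - r v) * r u * F^-1 * (deg e u)%:R^-1 * (deg e v)%:R^-1 by ring.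
  rewrite !mulr_ge0 // ?invr_ge0 ?F_ge0 ?subr_ge0 ?Hbias // ltW //.
by rewrite !mulr0 addr0.
Qed.

Lemma drift X : 0 <= Ex X (fun u v => phi (nxt X u v) - phi X).
Proof.
set D := fun u v => cc X u v * (phi (nxt X u v) - phi X).
have E : Ex X (fun u v => phi (nxt X u v) - phi X) *+ 2 =
         \sum_u \sum_v (D u v + D v u).
  rewrite mulr2n; under [RHS]eq_bigr => u _ do rewrite big_split /=.
  rewrite big_split /=; congr (_ + _).
  by rewrite exchange_big.
have : 0 <= Ex X (fun u v => phi (nxt X u v) - phi X) *+ 2.
  by rewrite E; apply: sumr_ge0 => u _; apply: sumr_ge0 => v _; exact: pair_ge0.
by rewrite mulr2n; lra.
Qed.


Definition ss : R := r_min r ^+ 3 / (#|V|%:R ^+ 4 * m_max m).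

Lemma second X : X != finset.set0 -> X != [set: V] ->
  ss <= Ex X (fun u v => (phi (nxt X u v) - phi X) ^+ 2).
Proof.
move=> h0 hT; have [u [v [uX vX euv]]] := boundary X h0 hT.
rewrite /Ex (bigD1 u) //= (bigD1 v) //=.
set T := cc X u v * _.
set S1 := \sum_(j | _) _.
set S2 := \sum_(i | _) _.
have r1 : 0 <= S1.
  by apply: sumr_ge0 => j _; apply: mulr_ge0; [exact: cc_ge0|exact: sqr_ge0].
have r2 : 0 <= S2.
  apply: sumr_ge0 => i _; apply: sumr_ge0 => j _.
  by apply: mulr_ge0; [exact: cc_ge0|exact: sqr_ge0].
suff : ss <= T by lra.
rewrite /T Delta uX vX /cc /weight euv /fitness uX /= mulr1n mul1r /aa.
pose N : R := #|V|%:R; pose M := m_max m; pose rm := r_min r.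
set du := (deg e u)%:R; set dv := (deg e v)%:R; set F := total_fitness m r X.
have rm0 : 0 < rm := rmin_gt0 u.
have M0 : 0 < M := lt_le_trans (Hm u) (le_mmax u).
have N0 : 0 < N by rewrite ltr0n; apply: ltn_trans Hn.
have du0 : 0 < du by rewrite ltr0n; exact: deg_pos.
have dv0 : 0 < dv by rewrite ltr0n; exact: deg_pos.
have duN : du <= N by rewrite ler_nat; exact: deg_le.
have dvN : dv <= N by rewrite ler_nat; exact: deg_le.
have F0 : 0 < F := F_pos X u.
have FN : F <= N * M := F_le X.
have rmu : rm <= m u := le_trans (rmin_le u) (Hbias u).
have rmv : rm <= r v := rmin_le v.
have -> : ss = (rm / (N * M) * N^-1) * (rm / N) ^+ 2.
  rewrite /ss -/N -/M -/rm; field.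
  by rewrite gt_eqF // gt_eqF.
apply: ler_pM.
- by rewrite mulr_ge0 // ?divr_ge0 ?invr_ge0 ?mulr_ge0 // ltW.
- exact: sqr_ge0.
- apply: ler_pM.
  + by rewrite divr_ge0 ?mulr_ge0 // ltW.
  + by rewrite invr_ge0 ltW.
  + by apply: le_div => //; exact: ltW.
  + by rewrite lef_pV2 // posrE.
- rewrite !expr2; apply: ler_pM.
  + by rewrite divr_ge0 // ltW.
  + by rewrite divr_ge0 // ltW.
  + by apply: le_div => //; exact: ltW.
  + by apply: le_div => //; exact: ltW.
Qed.


Lemma phi_ge0 X : 0 <= phi X.
Proof. by apply: sumr_ge0 => x _; rewrite mulr_ge0 ?ler0n ?aa_ge0. Qed.

Lemma phi_le X : phi X <= #|V|%:R * m_max m.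
Proof.
rewrite /phi; apply: le_trans (_ : \sum_(x : V) m_max m <= _); last first.
  by rewrite sumr_const mulr_natl.
apply: ler_sum => x _; case: (x \in X); rewrite /= ?mulr1n ?mulr0n ?mul1r ?mul0r;
  last exact: mmax_ge0.
apply: le_trans (le_trans (Hbias x) (le_mmax x)).
rewrite /aa -[X in _ <= X]divr1; apply: le_div => //; first exact: ltW.
by rewrite ler1n; exact: deg_pos.
Qed.

Lemma per_state X : phi X ^+ 2 + ss * ((X != finset.set0) && (X != [set: V]))%:R
   <= \sum_Y moran_step e m r X Y * phi Y ^+ 2.
Proof.
rewrite (step_exp X (fun Y => phi Y ^+ 2)).
have -> : Ex X (fun u v => phi (nxt X u v) ^+ 2) = Ex X (fun u v => phi X ^+ 2 +
   ((phi X *+ 2) * (phi (nxt X u v) - phi X) + (phi (nxt X u v) - phi X) ^+ 2)).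
  by apply: eq_Ex => u v; ring.
rewrite ExD Ex1 ExD ExZ lerD2l.
have d0 := drift X; have p0 := phi_ge0 X.
have q0 : 0 <= Ex X (fun u v => (phi (nxt X u v) - phi X) ^+ 2).
  by apply: Ex_ge0 => u v; exact: sqr_ge0.
have t0 : 0 <= phi X *+ 2 * Ex X (fun u v => phi (nxt X u v) - phi X).
  by rewrite mulr_ge0 // mulrn_wge0.
case: (boolP ((X != finset.set0) && (X != [set: V]))) => [/andP [h0 hT]|_] /=;
  rewrite ?mulr1n ?mulr0n ?mulr1 ?mulr0.
  have := second X h0 hT; lra.
lra.
Qed.

Lemma step_ge0 X Y : 0 <= moran_step e m r X Y.
Proof.
apply: sumr_ge0 => u _; apply: sumr_ge0 => v _.
by apply: mulr_ge0; [exact: (cc_ge0 X u v)| case: ifP].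
Qed.

Lemma step_sum X : \sum_Y moran_step e m r X Y = 1.
Proof.
have := step_exp X (fun _ => 1); rewrite Ex1 => <-.
by apply: eq_bigr => Y _; rewrite mulr1.
Qed.

Lemma mu_ge0 S t Y : 0 <= moran_dist e m r S t Y.
Proof.
elim: t Y => [|t IH] Y /=; first by case: ifP.
by apply: sumr_ge0 => X _; apply: mulr_ge0 => //; exact: step_ge0.
Qed.

Lemma mu_sum S t : \sum_Y moran_dist e m r S t Y = 1.
Proof.
elim: t => [|t IH] /=.
  by rewrite (bigD1 S) //= eqxx big1 ?addr0 // => Y /negbTE ->.
rewrite exchange_big /= -[RHS]IH; apply: eq_bigr => X _.
by rewrite -mulr_sumr step_sum mulr1.
Qed.

Definition AA S t := \sum_X moran_dist e m r S t X * phi X ^+ 2.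

Lemma AA_step S t : AA S t + ss * not_absorbed_prob e m r S t <= AA S t.+1.
Proof.
rewrite /AA /=.
have -> : \sum_Y (\sum_X moran_dist e m r S t X * moran_step e m r X Y) * phi Y ^+ 2
   = \sum_X moran_dist e m r S t X * \sum_Y moran_step e m r X Y * phi Y ^+ 2.
  under eq_bigr => Y _ do rewrite mulr_suml.
  rewrite exchange_big; apply: eq_bigr => X _; rewrite mulr_sumr.
  by apply: eq_bigr => Y _; rewrite mulrA.
have -> : not_absorbed_prob e m r S t = \sum_X moran_dist e m r S t X *
     ((X != finset.set0) && (X != [set: V]))%:R.
  rewrite /not_absorbed_prob big_mkcond /=; apply: eq_bigr => X _.
  by case: ifP => _; rewrite /= ?mulr1n ?mulr0n ?mulr1 ?mulr0.
rewrite mulr_sumr -big_split; apply: ler_sum => X _.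
rewrite /= [ss * _]mulrCA -mulrDr; apply: ler_wpM2l; first exact: mu_ge0.
exact: per_state.
Qed.

Lemma AA_le S t : AA S t <= (#|V|%:R * m_max m) ^+ 2.
Proof.
rewrite /AA; apply: le_trans
  (_ : \sum_X moran_dist e m r S t X * (#|V|%:R * m_max m) ^+ 2 <= _).
  apply: ler_sum => X _; apply: ler_wpM2l; first exact: mu_ge0.
  by rewrite !expr2; apply: ler_pM; rewrite ?phi_ge0 ?phi_le.
by rewrite -mulr_suml mu_sum mul1r.
Qed.

Lemma AA_ge0 S t : 0 <= AA S t.
Proof.
by apply: sumr_ge0 => X _; rewrite mulr_ge0 ?mu_ge0 ?sqr_ge0.
Qed.

Lemma tele S N : ss * \sum_(0 <= t < N) not_absorbed_prob e m r S t <= AA S N - AA S 0.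
Proof.
elim: N => [|N IH]; first by rewrite big_geq // mulr0 subrr.
rewrite big_nat_recr //= mulrDr; have := AA_step S N; lra.
Qed.

Lemma partial S N : \sum_(0 <= t < N) not_absorbed_prob e m r S t <=
  ((#|V| ^ 2)%:R * (m_max m / r_min r)) ^+ 3.
Proof.
have [u0 _] : exists u0 : V, true.
  by move/card_gt1P: Hn => [x [_ _]]; exists x.
pose N' : R := #|V|%:R.
have rm0 : 0 < r_min r := rmin_gt0 u0.
have M0 : 0 < m_max m := lt_le_trans (Hm u0) (le_mmax u0).
have N0 : 0 < N' by rewrite ltr0n; apply: ltn_trans Hn.
have ss0 : 0 < ss by rewrite /ss divr_gt0 // ?exprn_gt0 // mulr_gt0 // exprn_gt0.
have -> : ((#|V| ^ 2)%:R * (m_max m / r_min r)) ^+ 3 = (N' * m_max m) ^+ 2 / ss.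
  rewrite /ss natrX -/N'; field.
  by rewrite !gt_eqF.
rewrite ler_pdivlMr // mulrC; apply: le_trans (tele S N) _.
have := AA_le S N; have := AA_ge0 S 0; rewrite -/N'; lra.
Qed.

End MoranProof.


Theorem lemma1 (R : realType) (V : finType) (e : rel V) (m r : V -> R)
  (S : {set V})
  (He : undirected_graph e) (Hconn : strongly_connected e)
  (Hm : forall u, 0 < m u) (Hr : forall u, 0 < r u)
  (Hbias : mutant_biased m r) :
  (expected_absorption_time e m r S <=
     (((#|V| ^ 2)%:R * (m_max m / r_min r)) ^+ 3)%R%:E)%E.
Proof.
have Bnd : forall N, \sum_(0 <= t < N) not_absorbed_prob e m r S t <=
    ((#|V| ^ 2)%:R * (m_max m / r_min r)) ^+ 3.
  case: (leqP #|V| 1) => hn N; last exact: partial.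
  rewrite big1; last first.
    move=> t _; rewrite /not_absorbed_prob big_pred0 // => X.
    apply/negP => /andP [h0 hT]; move/set0Pn: h0 => [x xX].
    apply: (negP hT); apply/eqP/setP => y; rewrite inE.
    move/card_le1_eqP: hn => H.
    by have -> := H x y isT isT.
  have := @mmax_ge0 R V m Hm; have := @rmin_ge0 R V r Hr => h1 h2.
  by rewrite exprn_ge0 // mulr_ge0 ?ler0n ?divr_ge0.
rewrite /expected_absorption_time.
apply: lime_le.
  apply: is_cvg_nneseries => t _ _; rewrite lee_fin.
  by apply: sumr_ge0 => X _; exact: mu_ge0.
apply: nearW => N; rewrite sumEFin lee_fin; exact: Bnd.
Qed.
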